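(* Let $\pi$ be a full-support distribution on $K$ arms, $r\in\mathbb{R}^K$, $\eta>0$. For any arm $k$ with $U(k)<0$, the DG gate satisfies $w(k)\le\pi(k)^{|U(k)|/\eta}$. In particular, if $j$ is an arm with $r(j)>r(k)$ and $|U(k)|\ge\Delta_{jk}/2$, then \[ w(k)\,\pi(k)\;\le\;\pi(k)^{1+\Delta_{jk}/(2\eta)}. \]
   Context: $U(a):=r(a)-\pi^\top r$ (advantage), $\ell(a):=-\log\pi(a)$ (surprisal), $\Delta_{ab}:=r(a)-r(b)$, and the DG gate is $w(a):=\sigma(U(a)\ell(a)/\eta)$ with $\sigma(x)=1/(1+e^{-x})$. *)

(* Defs.v *)
(* concrete reals R. Arms are indexed by 0..K-1 (nat). *)
From Stdlib Require Import Reals Lra.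
Open Scope R_scope.

Fixpoint sumK (K : nat) (f : nat -> R) : R :=
  match K with
  | O => 0
  | S n => sumK n f + f n
  end.

Definition full_support_dist (K : nat) (pi : nat -> R) : Prop :=
  (forall a, (a < K)%nat -> 0 < pi a) /\ sumK K pi = 1.

Definition baseline (K : nat) (pi r : nat -> R) : R :=
  sumK K (fun a => pi a * r a).

Definition adv (K : nat) (pi r : nat -> R) (a : nat) : R :=
  r a - baseline K pi r.

Definition surprisal (pi : nat -> R) (a : nat) : R := - ln (pi a).

Definition sigmoid (x : R) : R := / (1 + exp (- x)).

Definition gate (K : nat) (pi r : nat -> R) (eta : R) (a : nat) : R :=
  sigmoid (adv K pi r a * surprisal pi a / eta).

Definition gap (r : nat -> R) (a b : nat) : R := r a - r b.

(* Main.v *)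
Require Import Defs.
From Stdlib Require Import Reals.
From Stdlib Require Import Lra Lia.
Open Scope R_scope.

Lemma sumK_nonneg (n : nat) (f : nat -> R) :
  (forall a, (a < n)%nat -> 0 < f a) -> 0 <= sumK n f.
Proof.
  induction n; simpl; intros H; [lra|].
  assert (0 < f n) by (apply H; lia).
  assert (0 <= sumK n f) by (apply IHn; intros; apply H; lia). lra.
Qed.

Lemma sumK_ge (n : nat) (f : nat -> R) k :
  (forall a, (a < n)%nat -> 0 < f a) -> (k < n)%nat -> f k <= sumK n f.
Proof.
  induction n; simpl; intros H Hk; [lia|].
  destruct (Nat.eq_dec k n) as [->|Hne].
  - assert (0 <= sumK n f) by (apply sumK_nonneg; intros; apply H; lia). lra.
  - assert (f k <= sumK n f) by (apply IHn; [intros; apply H; lia| lia]).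
    assert (0 < f n) by (apply H; lia). lra.
Qed.

Lemma exp_le_mono x y : x <= y -> exp x <= exp y.
Proof.
  intros [H|H]; [left; apply exp_increasing; exact H| rewrite H; lra].
Qed.

Theorem lemma2 (K : nat) (pi r : nat -> R) (eta : R)
  (Hpi : full_support_dist K pi) (Heta : 0 < eta) :
  forall k : nat, (k < K)%nat -> adv K pi r k < 0 ->
    gate K pi r eta k <= Rpower (pi k) (Rabs (adv K pi r k) / eta)
    /\
    (forall j : nat, (j < K)%nat -> r j > r k ->
       Rabs (adv K pi r k) >= gap r j k / 2 ->
       gate K pi r eta k * pi k <= Rpower (pi k) (1 + gap r j k / (2 * eta))).
Proof.
  intros k Hk HU.
  destruct Hpi as [Hpos Hsum].
  assert (Hp : 0 < pi k) by (apply Hpos; exact Hk).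
  assert (Hp1 : pi k <= 1) by (rewrite <- Hsum; apply sumK_ge; auto).
  assert (Hln : ln (pi k) <= 0).
  { destruct (Req_dec (pi k) 1) as [E|E].
    - rewrite E, ln_1; lra.
    - left; rewrite <- ln_1; apply ln_increasing; lra. }
  set (U := adv K pi r k) in *.
  rewrite (Rabs_left U HU).
  assert (Hx : U * surprisal pi k / eta = - U / eta * ln (pi k)).
  { unfold surprisal; field; lra. }
  assert (Hw : gate K pi r eta k <= Rpower (pi k) (- U / eta)).
  { unfold gate, sigmoid, Rpower. fold U. rewrite Hx.
    set (y := - U / eta * ln (pi k)).
    assert (0 < exp (- y)) by apply exp_pos.
    assert (exp y * exp (- y) = 1) by (rewrite <- exp_plus; replace (y + - y) with 0 by ring; apply exp_0).
    assert (0 < exp y) by apply exp_pos.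
    apply (Rmult_le_reg_r (1 + exp (- y))); [lra|].
    rewrite Rinv_l by lra. nra. }
  split; [exact Hw|].
  intros j Hj Hr Hge.
  assert (Hwpos : 0 <= gate K pi r eta k).
  { unfold gate, sigmoid. fold U. left. apply Rinv_0_lt_compat.
    assert (0 < exp (- (U * surprisal pi k / eta))) by apply exp_pos. lra. }
  apply Rle_trans with (Rpower (pi k) (- U / eta) * pi k).
  { apply Rmult_le_compat_r; lra. }
  unfold Rpower. rewrite <- (exp_ln (pi k)) at 2 by lra.
  rewrite <- exp_plus.
  apply exp_le_mono.
  assert (Hg : gap r j k / (2 * eta) <= - U / eta).
  { replace (gap r j k / (2 * eta)) with ((gap r j k / 2) / eta) by (field; lra).
    unfold Rdiv at 1 2.
    apply Rmult_le_compat_r; [left; apply Rinv_0_lt_compat; lra|].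
    lra. }
  nra.
Qed.
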